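(* Let $\mathcal{G}_n(\mathcal{X},\mathcal{Y},d,Q)$ be a position-optimization game (as defined in the context). If $\bm{x}$ is a pure strategy profile that covers $\mathcal{X}^*$, then for any player $i$, every strictly profitable deviation $x'$ (i.e. $x'\in\mathcal{X}$ with $u_i(x',\bm{x}_{-i})>u_i(x_i,\bm{x}_{-i})$) satisfies $x'\in\mathcal{X}^*$.
   Context: Position-optimization game: $\mathcal{X}$ is an arbitrary set of positions, $\mathcal{Y}$ an arbitrary set of targets, $d:\mathcal{X}\times\mathcal{Y}\to[0,\infty]$ a proximity function. For $y\in\mathcal{Y}$ let $x^*(y)=\arg\min_{x\in\mathcal{X}} d(x,y)$, and $\mathcal{X}^*=\bigcup_{y\in\mathcal{Y}}x^*(y)$ (pseudo-targets). $Q$ is a probability distribution on $\mathcal{Y}$ with $Q(\{y:|x^*(y)|>1\})=0$ and $|\mathcal{X}^*|<\infty$. In the game $\mathcal{G}_n(\mathcal{X},\mathcal{Y},d,Q)$, players $i\in[n]$ choose positions $x_i\in\mathcal{X}$, $\bm{x}=(x_1,\dots,x_n)$; with $X_{\min}(\bm{x},y)=\arg\min_{x_i\in\bm{x}} d(x_i,y)$, player $i$'s utility is $u_i(x_i,\bm{x}_{-i})=\mathbb{E}_{y\sim Q}\big[\mathbb{1}[x_i\in X_{\min}(\bm{x},y)]/|X_{\min}(\bm{x},y)|\big]$. $k_{\bm{x}}(x)$ is the number of players at position $x$; $\bm{x}$ covers $\mathcal{X}^*$ if $k_{\bm{x}}(x)\ge1$ for all $x\in\mathcal{X}^*$. *)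

(* Defs.v *)
From HB Require Import structures.
From mathcomp Require Import all_boot all_order all_algebra.
From mathcomp Require Import all_classical all_reals all_analysis.
From mathcomp Require Import measurable_realfun.
Set Implicit Arguments. Unset Strict Implicit. Unset Printing Implicit Defensive.
Import Order.TTheory GRing.Theory Num.Theory.
Local Open Scope classical_set_scope.
Local Open Scope ring_scope.

Section PositionGame.
Context {X : Type} {dY : measure_display} {Y : measurableType dY} {R : realType}.
Variable dist : X -> Y -> \bar R.

Definition xstar (y : Y) : set X :=
  [set x | forall x', (dist x y <= dist x' y)%E].

Definition Xstar : set X := \bigcup_(y in setT) xstar y.

Definition multi_argmin : set Y :=
  [set y | exists x1 x2, xstar y x1 /\ xstar y x2 /\ x1 <> x2].

Variable n : nat.

Definition Xmin (xs : 'I_n -> X) (y : Y) : {set 'I_n} :=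
  [set j | [forall k, (dist (xs j) y <= dist (xs k) y)%E]].

Definition payoff (xs : 'I_n -> X) (i : 'I_n) (y : Y) : R :=
  if i \in Xmin xs y then (#|Xmin xs y|%:R)^-1 else 0.

Definition utility (Q : probability Y R) (xs : 'I_n -> X) (i : 'I_n) : \bar R :=
  (\int[Q]_y (payoff xs i y)%:E)%E.

Definition deviate (xs : 'I_n -> X) (i : 'I_n) (x' : X) : 'I_n -> X :=
  fun j => if j == i then x' else xs j.

(* k_x(x) >= 1 for all x in X^* *)
Definition covers (xs : 'I_n -> X) : Prop :=
  forall x, Xstar x -> exists j, xs j = x.

End PositionGame.

(* Main.v *)
Require Import Defs.
From HB Require Import structures.
From mathcomp Require Import all_boot all_order all_algebra.
From mathcomp Require Import all_classical all_reals all_analysis.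
From mathcomp Require Import measurable_realfun.
Import Order.TTheory GRing.Theory Num.Theory.
Local Open Scope classical_set_scope.
Local Open Scope ring_scope.

Lemma mono_int d (T : measurableType d) (R : realType)
  (mu : {measure set T -> \bar R}) (f g : T -> \bar R) :
  (forall x, (0 <= f x)%E) -> (forall x, (f x <= g x)%E) ->
  (\int[mu]_x f x <= \int[mu]_x g x)%E.
Proof.
move=> f0 fg.
have g0 : forall x, (0 <= g x)%E by move=> x; exact: le_trans (f0 x) (fg x).
rewrite !ge0_integralTE //.
apply: le_ereal_sup => _ [h hf <-]; exists h => //= x.
exact: le_trans (hf x) (fg x).
Qed.

Lemma payoff_ge0 (X : Type) (dY : measure_display) (Y : measurableType dY)
  (R : realType) (d : X -> Y -> \bar R) n (xs : 'I_n -> X) i y :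
  0 <= payoff d xs i y :> R.
Proof. rewrite /payoff; case: ifP => // _; by rewrite invr_ge0. Qed.

Theorem lemma2 (X : Type) (dY : measure_display) (Y : measurableType dY)
  (R : realType) (d : X -> Y -> \bar R) (Q : probability Y R) (n : nat)
  (d_ge0 : forall x y, (0 <= d x y)%E)
  (d_meas : forall x, measurable_fun setT (d x))
  (argmin_ex : forall y, exists x, xstar d y x)
  (Q_uniq : Q.-negligible (multi_argmin d))
  (Xstar_fin : finite_set (Xstar d))
  (xs : 'I_n -> X) (cov : covers d xs) :
  forall (i : 'I_n) (x' : X),
    (utility d Q xs i < utility d Q (deviate xs i x') i)%E -> Xstar d x'.
Proof.
move=> i x' Hlt; apply: contrapT => Hx'.
move: Hlt; apply/negP; rewrite -leNgt /utility.
apply: mono_int => [y|y]; first by rewrite lee_fin payoff_ge0.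
rewrite lee_fin.
have Hy : ~ xstar d y x' by move=> H; apply: Hx'; exists y.
have [z Hz] : exists z, (d z y < d x' y)%E.
  apply: contrapT => H; apply: Hy => w; rewrite leNgt; apply/negP => Hw.
  by apply: H; exists w.
have [xm Hxm] := argmin_ex y.
have Hlt : (d xm y < d x' y)%E by exact: le_lt_trans (Hxm z) Hz.
have [j Hj] : exists j, xs j = xm by apply: cov; exists y.
rewrite {1}/payoff; case: ifP => Hi; last exact: payoff_ge0.
move: (Hi); rewrite inE => /forallP Hall.
have Hdi : deviate xs i x' i = x' by rewrite /deviate eqxx.
have Hji : j = i.
  apply/eqP; apply: contraT => Hne.
  have := Hall j; rewrite Hdi /deviate (negbTE Hne) Hj.
  by rewrite leNgt Hlt.
subst j.
have Hxi : i \in Xmin d xs y.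
  by rewrite inE; apply/forallP => k; rewrite Hj; exact: Hxm.
have Hset : Xmin d xs y = [set i]%SET.
  apply/setP => k; rewrite finset.in_set1; apply/idP/eqP; last by move->.
  move=> Hk; apply/eqP; apply: contraT => Hne.
  move: Hk; rewrite inE => /forallP /(_ i); rewrite Hj => Hk.
  have := Hall k; rewrite Hdi /deviate (negbTE Hne) => Hk'.
  by move: (le_trans Hk' Hk); rewrite leNgt Hlt.
rewrite /payoff Hxi Hset finset.cards1 invr1.
rewrite invf_le1 ?ltr0n ?ler1n ?card_gt0; try by apply/set0Pn; exists i.
Qed.
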